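(* $\mathbf{V}_{\mathcal{D}}=\mathbf{V}_{\mathcal{L}}\vee\mathbf{V}_{\mathcal{R}}$, the join being taken in the lattice of subvarieties of the variety of idempotent semirings.
   Context: An idempotent semiring is an algebra $(S,+,\cdot)$ with $(S,+)$, $(S,\cdot)$ bands and both distributive laws; addition not assumed commutative. $\mathbf{V}_{\mathcal{D}}$, $\mathbf{V}_{\mathcal{L}}$, $\mathbf{V}_{\mathcal{R}}$ denote the varieties of idempotent semirings satisfying $x\approx xyx+x+xyx$, $x\approx xy+x+xy$, $x\approx yx+x+yx$ respectively (equivalently, those on which the Green's relation $\mathcal{D}^{\bullet}$, resp. $\mathcal{L}^{\bullet}$, $\mathcal{R}^{\bullet}$, is the least distributive lattice congruence). The join of two varieties is the smallest variety containing both. *)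

(* Defs.v *)
(** An idempotent semiring: the additive and multiplicative reducts are bands (associative,
    idempotent), both distributive laws hold; addition is NOT assumed commutative. *)
Record isemiring := ISR {
  car :> Type;
  sadd : car -> car -> car;
  smul : car -> car -> car;
  sadd_assoc : forall x y z, sadd x (sadd y z) = sadd (sadd x y) z;
  sadd_idem  : forall x, sadd x x = x;
  smul_assoc : forall x y z, smul x (smul y z) = smul (smul x y) z;
  smul_idem  : forall x, smul x x = x;
  smul_distl : forall x y z, smul x (sadd y z) = sadd (smul x y) (smul x z);
  smul_distr : forall x y z, smul (sadd x y) z = sadd (smul x z) (smul y z)
}.

Arguments sadd {i} _ _.
Arguments smul {i} _ _.

Inductive term : Type :=
| tvar : nat -> term
| tadd : term -> term -> term
| tmul : term -> term -> term.

Fixpoint teval (S : isemiring) (v : nat -> S) (t : term) : S :=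
  match t with
  | tvar n => v n
  | tadd a b => sadd (teval S v a) (teval S v b)
  | tmul a b => smul (teval S v a) (teval S v b)
  end.

Definition holds (S : isemiring) (p q : term) : Prop :=
  forall v : nat -> S, teval S v p = teval S v q.

(** A class of idempotent semirings is a variety (subvariety of the variety
    of idempotent semirings) iff it is the class of all idempotent semirings
    satisfying some set E of identities (Birkhoff: equivalently HSP-closed). *)
Definition is_variety (K : isemiring -> Prop) : Prop :=
  exists E : term -> term -> Prop,
    forall S, K S <-> (forall p q, E p q -> holds S p q).

Definition in_VD (S : isemiring) : Prop :=
  forall x y : S, x = sadd (sadd (smul (smul x y) x) x) (smul (smul x y) x).

Definition in_VL (S : isemiring) : Prop :=
  forall x y : S, x = sadd (sadd (smul x y) x) (smul x y).

Definition in_VR (S : isemiring) : Prop :=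
  forall x y : S, x = sadd (sadd (smul y x) x) (smul y x).

Definition is_join (K K1 K2 : isemiring -> Prop) : Prop :=
  is_variety K /\
  (forall S, K1 S -> K S) /\ (forall S, K2 S -> K S) /\
  (forall K', is_variety K' -> (forall S, K1 S -> K' S) ->
              (forall S, K2 S -> K' S) -> forall S, K S -> K' S).

(* Main.v *)
Require Import Defs.
From Stdlib Require Import FunctionalExtensionality PropExtensionality ProofIrrelevance ClassicalEpsilon.

Local Infix "⊕" := sadd (at level 50, left associativity).
Local Infix "⊗" := smul (at level 40, left associativity).

Ltac rnorm := repeat rewrite <- smul_assoc.

Definition lep (S : isemiring) (a b : S) : Prop := a ⊕ b = a /\ b ⊕ a = a.

Lemma lep_trans (S : isemiring) (a b c : S) : lep S a b -> lep S b c -> lep S a c.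
Proof.
  intros [H1 H2] [H3 H4]; split.
  - rewrite <- H1 at 1. rewrite <- sadd_assoc, H3. exact H1.
  - rewrite <- H2 at 1. rewrite sadd_assoc, H4. exact H2.
Qed.

Lemma lep_antisym (S : isemiring) (a b : S) : lep S a b -> lep S b a -> a = b.
Proof. intros [H1 H2] [H3 H4]. rewrite <- H2. exact H3. Qed.

Lemma lep_mull (S : isemiring) (a b c : S) : lep S a b -> lep S (c ⊗ a) (c ⊗ b).
Proof. intros [H1 H2]; split; rewrite <- smul_distl; congruence. Qed.

Lemma lep_mulr (S : isemiring) (a b c : S) : lep S a b -> lep S (a ⊗ c) (b ⊗ c).
Proof. intros [H1 H2]; split; rewrite <- smul_distr; congruence. Qed.

Lemma lep_ins (S : isemiring) (H : in_VD S) (m t : S) : lep S m (m ⊗ t ⊗ m).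
Proof.
  pose proof (H m t) as Hm. set (u := m ⊗ t ⊗ m) in *. split.
  - rewrite Hm at 1. rewrite <- sadd_assoc, sadd_idem. symmetry; exact Hm.
  - rewrite Hm at 1. rewrite !sadd_assoc, sadd_idem. symmetry; exact Hm.
Qed.

Lemma B2 (S : isemiring) (a b r : S) : a ⊗ (b ⊗ (a ⊗ (b ⊗ r))) = a ⊗ (b ⊗ r).
Proof. rewrite !smul_assoc. rewrite <- (smul_assoc _ (a ⊗ b) a b), smul_idem. reflexivity. Qed.
Lemma B2e (S : isemiring) (a b : S) : a ⊗ (b ⊗ (a ⊗ b)) = a ⊗ b.
Proof. rewrite !smul_assoc. rewrite <- (smul_assoc _ (a ⊗ b) a b), smul_idem. reflexivity. Qed.
Lemma B3 (S : isemiring) (a b c r : S) : a ⊗ (b ⊗ (c ⊗ (a ⊗ (b ⊗ (c ⊗ r))))) = a ⊗ (b ⊗ (c ⊗ r)).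
Proof.
  replace (a ⊗ (b ⊗ (c ⊗ (a ⊗ (b ⊗ (c ⊗ r)))))) with ((a ⊗ b ⊗ c) ⊗ (a ⊗ b ⊗ c) ⊗ r) by (rnorm; reflexivity).
  rewrite smul_idem. rnorm; reflexivity.
Qed.

Lemma lep_eq (S : isemiring) (a b a' b' : S) : a = a' -> b = b' -> lep S a b -> lep S a' b'.
Proof. intros; subst; auto. Qed.

Lemma VD_N (S : isemiring) (H : in_VD S) (z y x : S) : z ⊗ y ⊗ x = z ⊗ x ⊗ y ⊗ x.
Proof.
  apply lep_antisym.
  - (* zyx <= zxyzyx <= zxyz y zx y x = zxyx *)
    eapply lep_trans.
    + eapply lep_eq; [ | reflexivity | exact (lep_mulr S _ _ (y ⊗ x) (lep_ins S H z (x ⊗ y)))].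
      rnorm; reflexivity.
    + eapply lep_eq; [ | | exact (lep_mulr S _ _ x (lep_mull S _ _ (z ⊗ x ⊗ y ⊗ z) (lep_ins S H y (z ⊗ x))))].
      { rnorm; reflexivity. }
      rnorm. rewrite B2, B3. rnorm. reflexivity.
  - eapply lep_trans.
    + eapply lep_eq; [ | reflexivity | exact (lep_mulr S _ _ (x ⊗ y ⊗ x) (lep_ins S H z (y ⊗ x)))].
      rnorm; reflexivity.
    + eapply lep_eq; [ | | exact (lep_mulr S _ _ (y ⊗ x) (lep_mull S _ _ (z ⊗ y ⊗ x ⊗ z) (lep_ins S H x (z ⊗ y))))].
      { rnorm; reflexivity. }
      rnorm. rewrite B2. rewrite B3, B2e. rnorm. reflexivity.
Qed.

Definition Lrel (S : isemiring) (a b : S) : Prop := a ⊗ b = a /\ b ⊗ a = b.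

Lemma LC (S : isemiring) (H : in_VD S) (a b c : S) : Lrel S a b -> c ⊗ a = c ⊗ b.
Proof.
  intros [H1 H2]. pose proof (VD_N S H c b a) as E.
  rewrite <- (smul_assoc _ c a b), H1, <- (smul_assoc _ c a a), smul_idem in E.
  rewrite <- (smul_assoc _ c b a), H2 in E. symmetry; exact E.
Qed.

Record congr (S : isemiring) := Congr {
  cr : S -> S -> Prop;
  cr_refl : forall a, cr a a;
  cr_sym : forall a b, cr a b -> cr b a;
  cr_trans : forall a b c, cr a b -> cr b c -> cr a c;
  cr_add : forall a b c d, cr a b -> cr c d -> cr (a ⊕ c) (b ⊕ d);
  cr_mul : forall a b c d, cr a b -> cr c d -> cr (a ⊗ c) (b ⊗ d) }.

Lemma Lrel_refl (S : isemiring) (a : S) : Lrel S a a.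
Proof. split; apply smul_idem. Qed.
Lemma Lrel_sym (S : isemiring) (a b : S) : Lrel S a b -> Lrel S b a.
Proof. intros [? ?]; split; auto. Qed.
Lemma Lrel_trans (S : isemiring) (a b c : S) : Lrel S a b -> Lrel S b c -> Lrel S a c.
Proof.
  intros [H1 H2] [H3 H4]; split.
  - rewrite <- H1 at 1. rewrite <- smul_assoc, H3. exact H1.
  - rewrite <- H4 at 1. rewrite <- smul_assoc, H2. exact H4.
Qed.
Lemma Lrel_addr (S : isemiring) (H : in_VD S) (a b c : S) : Lrel S a b -> Lrel S (a ⊕ c) (b ⊕ c).
Proof.
  intros Hab. pose proof (fun c => LC S H a b c Hab) as E1. pose proof (fun c => LC S H b a c (Lrel_sym S _ _ Hab)) as E2.
  split.
  - rewrite smul_distl, <- E1, <- smul_distl. apply smul_idem.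
  - rewrite smul_distl, <- E2, <- smul_distl. apply smul_idem.
Qed.
Lemma Lrel_addl (S : isemiring) (H : in_VD S) (a b c : S) : Lrel S a b -> Lrel S (c ⊕ a) (c ⊕ b).
Proof.
  intros Hab. pose proof (fun c => LC S H a b c Hab) as E1. pose proof (fun c => LC S H b a c (Lrel_sym S _ _ Hab)) as E2.
  split.
  - rewrite smul_distl, <- E1, <- smul_distl. apply smul_idem.
  - rewrite smul_distl, <- E2, <- smul_distl. apply smul_idem.
Qed.
Lemma Lrel_mull (S : isemiring) (H : in_VD S) (a b c : S) : Lrel S a b -> Lrel S (c ⊗ a) (c ⊗ b).
Proof. intros Hab. rewrite (LC S H a b c Hab). apply Lrel_refl. Qed.
Lemma Lrel_mulr (S : isemiring) (H : in_VD S) (a b c : S) : Lrel S a b -> Lrel S (a ⊗ c) (b ⊗ c).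
Proof.
  intros Hab. pose proof (fun c => LC S H a b c Hab) as E1. pose proof (fun c => LC S H b a c (Lrel_sym S _ _ Hab)) as E2.
  split.
  - rewrite smul_assoc, <- E1, <- (smul_assoc _ (a ⊗ c) a c), smul_idem. reflexivity.
  - rewrite smul_assoc, <- E2, <- (smul_assoc _ (b ⊗ c) b c), smul_idem. reflexivity.
Qed.

Definition Lc (S : isemiring) (H : in_VD S) : congr S.
Proof.
  refine (Congr S (Lrel S) (Lrel_refl S) (Lrel_sym S) (Lrel_trans S) _ _).
  - intros a b c d H1 H2. eapply Lrel_trans. apply (Lrel_addr S H a b c H1). apply (Lrel_addl S H c d b H2).
  - intros a b c d H1 H2. eapply Lrel_trans. apply (Lrel_mulr S H a b c H1). apply (Lrel_mull S H c d b H2).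
Defined.

Definition qcar (S : isemiring) (C : congr S) := {P : S -> Prop | exists x, P = cr S C x}.
Definition qcls (S : isemiring) (C : congr S) (x : S) : qcar S C :=
  exist _ (cr S C x) (ex_intro _ x eq_refl).
Definition qrep (S : isemiring) (C : congr S) (P : qcar S C) : S :=
  proj1_sig (constructive_indefinite_description _ (proj2_sig P)).
Lemma qrep_spec (S : isemiring) (C : congr S) (P : qcar S C) : proj1_sig P = cr S C (qrep S C P).
Proof. unfold qrep. destruct (constructive_indefinite_description _ _). simpl. exact e. Qed.
Lemma qext (S : isemiring) (C : congr S) (P Q : qcar S C) : proj1_sig P = proj1_sig Q -> P = Q.
Proof.
  destruct P as [P HP], Q as [Q HQ]; simpl; intros E; subst. f_equal. apply proof_irrelevance.
Qed.
Lemma qcls_rep (S : isemiring) (C : congr S) (P : qcar S C) : qcls S C (qrep S C P) = P.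
Proof. apply qext. simpl. symmetry. apply qrep_spec. Qed.
Lemma qcls_eq (S : isemiring) (C : congr S) (a b : S) : cr S C a b -> qcls S C a = qcls S C b.
Proof.
  intros H. apply qext. simpl. extensionality z. apply propositional_extensionality. split; intros H'.
  - eapply cr_trans. apply cr_sym. exact H. exact H'.
  - eapply cr_trans. exact H. exact H'.
Qed.
Lemma qcls_inv (S : isemiring) (C : congr S) (a b : S) : qcls S C a = qcls S C b -> cr S C a b.
Proof.
  intros H. apply (f_equal (@proj1_sig _ _)) in H. simpl in H.
  pose proof (cr_refl S C a) as R. rewrite H in R. apply cr_sym. exact R.
Qed.
Lemma qrep_cls (S : isemiring) (C : congr S) (a : S) : cr S C (qrep S C (qcls S C a)) a.
Proof. apply qcls_inv. apply qcls_rep. Qed.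

Definition qadd (S : isemiring) (C : congr S) (P Q : qcar S C) : qcar S C :=
  qcls S C (qrep S C P ⊕ qrep S C Q).
Definition qmul (S : isemiring) (C : congr S) (P Q : qcar S C) : qcar S C :=
  qcls S C (qrep S C P ⊗ qrep S C Q).
Lemma qadd_cls (S : isemiring) (C : congr S) (a b : S) : qadd S C (qcls S C a) (qcls S C b) = qcls S C (a ⊕ b).
Proof. apply qcls_eq. apply cr_add; apply qrep_cls. Qed.
Lemma qmul_cls (S : isemiring) (C : congr S) (a b : S) : qmul S C (qcls S C a) (qcls S C b) = qcls S C (a ⊗ b).
Proof. apply qcls_eq. apply cr_mul; apply qrep_cls. Qed.

Ltac qsetup S C :=
  intros;
  repeat match goal with
  | P : qcar S C |- _ => rewrite <- (qcls_rep S C P); generalize (qrep S C P); clear P; intro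
  end;
  rewrite ?qadd_cls, ?qmul_cls, ?qadd_cls, ?qmul_cls, ?qadd_cls, ?qmul_cls; f_equal.

Definition quot (S : isemiring) (C : congr S) : isemiring.
Proof.
  refine (ISR (qcar S C) (qadd S C) (qmul S C) _ _ _ _ _ _).
  - qsetup S C. apply sadd_assoc.
  - qsetup S C. apply sadd_idem.
  - qsetup S C. apply smul_assoc.
  - qsetup S C. apply smul_idem.
  - qsetup S C. apply smul_distl.
  - qsetup S C. apply smul_distr.
Defined.

Definition opS (S : isemiring) : isemiring.
Proof.
  refine (ISR (car S) (@sadd S) (fun x y => @smul S y x) _ _ _ _ _ _).
  - apply sadd_assoc.
  - apply sadd_idem.
  - intros; symmetry; apply smul_assoc.
  - apply smul_idem.
  - intros; apply smul_distr.
  - intros; apply smul_distl.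
Defined.

Lemma VD_op (S : isemiring) (H : in_VD S) : in_VD (opS S).
Proof.
  intros x y. simpl. pose proof (H x y) as E. rewrite <- smul_assoc in E. exact E.
Qed.

Lemma hom_teval (S T : isemiring) (f : S -> T)
  (Ha : forall a b, f (a ⊕ b) = f a ⊕ f b) (Hm : forall a b, f (a ⊗ b) = f a ⊗ f b) :
  forall v t, teval T (fun n => f (v n)) t = f (teval S v t).
Proof.
  intros v t; induction t; simpl; [reflexivity | rewrite Ha | rewrite Hm]; congruence.
Qed.

Lemma quot_VR (S : isemiring) (H : in_VD S) : in_VR (quot S (Lc S H)).
Proof.
  intros X Y. simpl.
  rewrite <- (qcls_rep S (Lc S H) X), <- (qcls_rep S (Lc S H) Y).
  generalize (qrep S (Lc S H) X) (qrep S (Lc S H) Y). clear X Y. intros x y.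
  rewrite !qmul_cls, !qadd_cls. apply qcls_eq. simpl. split.
  - rewrite !smul_distl, !smul_assoc, smul_idem. symmetry. apply H.
  - rewrite !smul_distr, <- !smul_assoc, !smul_idem. reflexivity.
Qed.

Theorem corollary4p10 : is_join in_VD in_VL in_VR.
Proof.
  split; [|split; [|split]].
  - exists (fun p q => p = tvar 0 /\
      q = tadd (tadd (tmul (tmul (tvar 0) (tvar 1)) (tvar 0)) (tvar 0)) (tmul (tmul (tvar 0) (tvar 1)) (tvar 0))).
    intros S; split.
    + intros H p q [-> ->] v. simpl. apply H.
    + intros H x y. apply (H _ _ (conj eq_refl eq_refl) (fun n => match n with 0 => x | _ => y end)).
  - intros S H x y. pose proof (H x (y ⊗ x)) as E. rewrite !smul_assoc in E. exact E.
  - intros S H x y. exact (H x (x ⊗ y)).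
  - intros K [E HE] H1 H2 S HS. apply HE. intros p q Hpq v.
    set (Q1 := quot S (Lc S HS)).
    assert (A1 : holds Q1 p q) by (apply (HE Q1); [apply H2; apply quot_VR | exact Hpq]).
    set (C2 := Lc (opS S) (VD_op S HS)).
    set (Q2 := opS (quot (opS S) C2)).
    assert (A2 : holds Q2 p q).
    { apply (HE Q2); [|exact Hpq]. apply H1. intros x y. apply (quot_VR (opS S) (VD_op S HS) x y). }
    specialize (A1 (fun n => qcls S (Lc S HS) (v n))).
    assert (F1a : forall a b, qcls S (Lc S HS) (a ⊕ b) = @sadd Q1 (qcls S (Lc S HS) a) (qcls S (Lc S HS) b)) by (intros; symmetry; apply qadd_cls).
    assert (F1m : forall a b, qcls S (Lc S HS) (a ⊗ b) = @smul Q1 (qcls S (Lc S HS) a) (qcls S (Lc S HS) b)) by (intros; symmetry; apply qmul_cls).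
    rewrite !(hom_teval S Q1 (qcls S (Lc S HS)) F1a F1m) in A1.
    specialize (A2 (fun n => qcls (opS S) C2 (v n))).
    assert (F2a : forall a b : S, qcls (opS S) C2 (@sadd S a b) = @sadd Q2 (qcls (opS S) C2 a) (qcls (opS S) C2 b)) by (intros; symmetry; apply (qadd_cls (opS S) C2 a b)).
    assert (F2m : forall a b : S, qcls (opS S) C2 (@smul S a b) = @smul Q2 (qcls (opS S) C2 a) (qcls (opS S) C2 b)) by (intros; symmetry; apply (qmul_cls (opS S) C2 b a)).
    rewrite !(hom_teval S Q2 (qcls (opS S) C2) F2a F2m) in A2.
    apply qcls_inv in A1. apply qcls_inv in A2. simpl in A1, A2.
    destruct A1 as [_ E1], A2 as [E2 _]. simpl in E2. rewrite <- E2. exact E1.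
Qed.
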